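(* Let $w=\mathcal C_n(v_0,\dots,v_{k_n-1})$ and $w'=\mathcal C_n(v'_0,\dots,v'_{k_n-1})$ be in $\mathcal W^c_{n+1}$, with $w$ sitting on $[0,q_{n+1})$ and $\mathrm{rev}(w')$ placed on $[j_1,q_{n+1}+j_1)$, where $j_1\in[0,q_n)$, $j_1\equiv p_n^{-1}\pmod{q_n}$. Then: (1) each occurrence of an $n$-subword $v_i$ of $w$ (a copy of $v_i$ in a power $v_i^{l_n-1}$) is either lined up with an occurrence of $\mathrm{rev}(v'_{k_n-i-1})$ in the placed $\mathrm{rev}(w')$, or lies entirely opposite positions of the boundary of the placed $\mathrm{rev}(w')$ (positions not belonging to any of its reversed $n$-subwords); (2) there is a number $C$ such that for every $i<k_n$, the number of occurrences of $v_i$ in $w$ lined up with an occurrence of $\mathrm{rev}(v'_{k_n-i-1})$ is exactly $C$.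
   Context: Circular coefficients $\langle k_n,l_n\rangle$: $k_n\ge2$, $l_n\ge2$, $p_0=0,q_0=1$, $q_{n+1}=k_nl_nq_n^2$, $p_{n+1}=p_nq_nk_nl_n+1$. $\mathcal C_n(w_0,\dots,w_{k_n-1})=\prod_{i=0}^{q_n-1}\prod_{j=0}^{k_n-1}(b^{q_n-j_i}w_j^{l_n-1}e^{j_i})$ (concatenation) with $j_i\in[0,q_n)$, $j_i\equiv p_n^{-1}i\pmod{q_n}$ ($j_i=0$ if $q_n=1$). $\mathcal W^c_n$ is a set of words of length $q_n$ over $\Sigma\cup\{b,e\}$ and $\mathcal W^c_{n+1}$ consists of words $\mathcal C_n(w_0,\dots,w_{k_n-1})$, $w_j\in\mathcal W^c_n$. $\mathrm{rev}(w)$ is $w$ written backwards; the boundary of $\mathcal C_n(\dots)$ consists of the letters in the displayed blocks $b^{q_n-j_i}$, $e^{j_i}$. *)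

(* Defs.v *)
From mathcomp Require Import all_boot.
Set Implicit Arguments. Unset Strict Implicit. Unset Printing Implicit Defensive.

(* Letters of Sigma ∪ {b, e}; words are seq (letter S). *)
Inductive letter (S : Type) := Sym of S | LB | LE.
Arguments LB {S}. Arguments LE {S}.

Fixpoint pq (k l : nat -> nat) (n : nat) : nat * nat :=
  match n with
  | 0 => (0, 1)
  | m.+1 => let (p, q) := pq k l m in (p * q * k m * l m + 1, k m * l m * (q * q))
  end.
Definition p_ k l n := (pq k l n).1.
Definition q_ k l n := (pq k l n).2.

(* j_i : the element of [0, q_n) with j_i = p_n^{-1} i (mod q_n), i.e. the
   (unique, since p_n and q_n are coprime) j < q_n with p_n * j = i (mod q_n).
   When q_n = 1 this is 0. *)
Definition jidx k l n i : nat :=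
  find (fun j => (p_ k l n * j) %% q_ k l n == i %% q_ k l n) (iota 0 (q_ k l n)).

(* The concatenation structure of C_n(w_0,...,w_{k_n-1}) as a list of segments:
   SB / SE = a single boundary letter b / e, SW j = one copy of w_j. *)
Inductive seg := SB | SE | SW of nat.

Definition segs k l n : seq seg :=
  flatten [seq flatten [seq nseq (q_ k l n - jidx k l n i) SB
                          ++ nseq (l n - 1) (SW j)
                          ++ nseq (jidx k l n i) SE
                       | j <- iota 0 (k n)]
          | i <- iota 0 (q_ k l n)].

Definition seg_word (S : Type) (ws : nat -> seq (letter S)) (s : seg) : seq (letter S) :=
  match s with SB => [:: LB] | SE => [:: LE] | SW j => ws j end.

Definition Cn (S : Type) k l n (ws : nat -> seq (letter S)) : seq (letter S) :=
  flatten [seq seg_word ws s | s <- segs k l n].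

Definition seg_start (S : Type) k l n (ws : nat -> seq (letter S)) (t : nat) : nat :=
  sumn [seq size (seg_word ws s) | s <- take t (segs k l n)].
Definition seg_end (S : Type) k l n (ws : nat -> seq (letter S)) (t : nat) : nat :=
  seg_start k l n ws t + size (seg_word ws (nth SB (segs k l n) t)).

Definition is_SW (j : nat) (s : seg) : bool :=
  if s is SW j' then j' == j else false.

Definition is_occ k l n (t j : nat) : bool :=
  (t < size (segs k l n)) && is_SW j (nth SB (segs k l n) t).

(* rev(w') placed on [a, a + |w'|): the t'-th segment of w' (occupying
   [st, en) in w') occupies [a + |w'| - en, a + |w'| - st) in the placed rev(w'). *)
Definition rplaced_start (S : Type) k l n (ws' : nat -> seq (letter S)) a t' :=
  a + size (Cn k l n ws') - seg_end k l n ws' t'.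
Definition rplaced_end (S : Type) k l n (ws' : nat -> seq (letter S)) a t' :=
  a + size (Cn k l n ws') - seg_start k l n ws' t'.

Definition lined_up (S : Type) k l n (ws ws' : nat -> seq (letter S)) a t j' : bool :=
  has (fun t' => is_occ k l n t' j'
                 && (seg_start k l n ws t == rplaced_start k l n ws' a t')
                 && (seg_end k l n ws t == rplaced_end k l n ws' a t'))
      (iota 0 (size (segs k l n))).

Definition rboundary (S : Type) k l n (ws' : nat -> seq (letter S)) a x : bool :=
  (a <= x < a + size (Cn k l n ws'))
  && all (fun t' => [exists j' : 'I_(k n), is_occ k l n t' j'] ==>
                    ~~ (rplaced_start k l n ws' a t' <= x < rplaced_end k l n ws' a t'))
         (iota 0 (size (segs k l n))).

(* Main.v *)
Require Import Defs.
From mathcomp Require Import all_boot.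
From mathcomp Require Import zify.
Set Implicit Arguments. Unset Strict Implicit. Unset Printing Implicit Defensive.

Lemma pq_S k l m : p_ k l m.+1 = p_ k l m * q_ k l m * k m * l m + 1 /\
                   q_ k l m.+1 = k m * l m * (q_ k l m * q_ k l m).
Proof. rewrite /p_ /q_ /=; by case: (pq k l m). Qed.

Lemma q_pos k l m : (forall m, 0 < k m) -> (forall m, 0 < l m) -> 0 < q_ k l m.
Proof.
move=> hk hl; elim: m => [|m IH]; first by rewrite /q_.
by rewrite (pq_S k l m).2 !muln_gt0 hk hl IH.
Qed.

Lemma coprime_aux x y : coprime (y * x + 1) x.
Proof. by rewrite /coprime gcdnC gcdnMDl gcdn1. Qed.

Lemma coprime_pq k l m : coprime (p_ k l m) (q_ k l m).
Proof.
case: m => [|m]; first by rewrite /p_ /q_.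
have [-> ->] := pq_S k l m.
set p := p_ k l m; set q := q_ k l m.
rewrite !coprimeMr.
have -> : p * q * k m * l m = (p * q * l m) * k m by rewrite mulnAC.
rewrite coprime_aux /=.
have -> : p * q * l m * k m = (p * q * k m) * l m by rewrite mulnAC.
rewrite coprime_aux /=.
have -> : p * q * k m * l m = (p * k m * l m) * q by rewrite -!mulnA; congr (_ * _);
   rewrite mulnC -!mulnA; congr (_ * _); rewrite mulnC -mulnA.
by rewrite coprime_aux.
Qed.

Lemma eqmodD d x y x' y' : x = x' %[mod d] -> y = y' %[mod d] -> x + y = x' + y' %[mod d].
Proof. by move=> h1 h2; rewrite -modnDml h1 modnDml -modnDmr h2 modnDmr. Qed.

Section J.
Variables (k l : nat -> nat) (n : nat).
Hypothesis hk : forall m, 2 <= k m.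
Hypothesis hl : forall m, 2 <= l m.
Local Notation q := (q_ k l n).
Local Notation p := (p_ k l n).
Local Notation J := (jidx k l n).

Lemma qpos : 0 < q.
Proof. apply: q_pos => m; [exact: leq_trans (hk m) | exact: leq_trans (hl m)]. Qed.

Lemma Jhas i : has (fun j => (p * j) %% q == i %% q) (iota 0 q).
Proof.
have cp := coprime_pq k l n.
set x := chinese p q 0 i.
have h1 : x = 0 %[mod p] := chinese_modl cp 0 i.
have h2 : x = i %[mod q] := chinese_modr cp 0 i.
have /dvdnP [u hu] : p %| x by rewrite /dvdn h1 mod0n.
apply/hasP; exists (u %% q); first by rewrite mem_iota /= ltn_pmod // qpos.
by apply/eqP; rewrite modnMmr mulnC -hu h2.
Qed.

Lemma Jlt i : J i < q.
Proof. by rewrite /jidx -[X in _ < X](size_iota 0 q) -has_find Jhas. Qed.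

Lemma Jmod i : (p * J i) %% q = i %% q.
Proof.
have := nth_find 0 (Jhas i); rewrite nth_iota ?add0n; first by move/eqP.
by rewrite -[X in _ < X](size_iota 0 q) -has_find Jhas.
Qed.

Lemma J0 : J 0 = 0.
Proof. rewrite /jidx; move: qpos; case: (q_ k l n) => [//|q'] _ /=. by rewrite muln0 mod0n eqxx. Qed.

Lemma Jzero a : a < q -> J a = 0 -> a = 0.
Proof. move=> ha h; have := Jmod a; by rewrite h muln0 mod0n modn_small. Qed.

Lemma dvd3 x : q %| x -> x < 3 * q -> x = 0 \/ x = q \/ x = 2 * q.
Proof.
move/dvdnP=> [d ->] h.
have : d < 3 by rewrite -(ltn_pmul2r qpos).
by case: d {h} => [|[|[|]]] //= _; [left|right;left|right;right]; lia.
Qed.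

Lemma dvdJ x y : (p * x) = y %[mod q] -> q %| y -> q %| x.
Proof.
move=> h hy; have cp : coprime q p by rewrite coprime_sym coprime_pq.
rewrite -(Gauss_dvdr x cp).
by rewrite /dvdn h; exact: hy.
Qed.

Lemma sumJ1 a : a < q -> q %| J 1 + J (q - 1 - a) + J a.
Proof.
move=> ha; apply: (@dvdJ _ (1 + (q - 1 - a) + a)); last by have -> : 1 + (q - 1 - a) + a = q by lia.
by rewrite !mulnDr; apply: eqmodD; [apply: eqmodD|]; apply: Jmod.
Qed.

Lemma sumJ2 a : 0 < a < q -> J (q - a) + J a = q.
Proof.
move=> /andP[a0 aq].
have hd : q %| J (q - a) + J a.
  apply: (@dvdJ _ ((q - a) + a)); last by have -> : q - a + a = q by lia.
  by rewrite !mulnDr; apply: eqmodD; apply: Jmod.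
have h1 := Jlt (q - a); have h2 := Jlt a.
have hne : J a <> 0 by move=> /(Jzero aq); lia.
have := dvd3 hd; lia.
Qed.

End J.

Section Flat.
Variables (T : Type) (L : nat).

Lemma nth_flatten_const (x0 : T) (ss : seq (seq T)) b r :
  all (fun s => size s == L) ss -> r < L ->
  nth x0 (flatten ss) (b * L + r) = nth x0 (nth [::] ss b) r.
Proof.
elim: ss b => [|s ss IH] b /=; first by rewrite !nth_nil.
move=> /andP[/eqP hs hall] hr; rewrite nth_cat hs.
case: b => [|b]; first by rewrite mul0n add0n hr.
rewrite mulSn -addnA ltnNge leq_addr /= addKn; exact: IH.
Qed.

Lemma take_flatten_const (ss : seq (seq T)) b r :
  all (fun s => size s == L) ss -> r <= L -> b < size ss ->
  take (b * L + r) (flatten ss) = flatten (take b ss) ++ take r (nth [::] ss b).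
Proof.
elim: ss b => [|s ss IH] b //=.
move=> /andP[/eqP hs hall] hr hb; rewrite take_cat hs.
case: b hb => [|b] hb.
  rewrite mul0n add0n /=; case: ltngtP hr => // -> _.
  by rewrite subnn take0 cats0 -hs take_size.
rewrite mulSn -addnA ltnNge leq_addr /= addKn IH //.
by rewrite catA.
Qed.

Lemma size_flatten_const (ss : seq (seq T)) :
  all (fun s => size s == L) ss -> size (flatten ss) = size ss * L.
Proof.
elim: ss => [|s ss IH] //= /andP[/eqP hs hall].
by rewrite size_cat hs IH // mulSn.
Qed.

Lemma sumn_flatten_const (f : T -> nat) W (ss : seq (seq T)) :
  all (fun s => sumn (map f s) == W) ss -> sumn (map f (flatten ss)) = size ss * W.
Proof.
elim: ss => [|s ss IH] //= /andP[/eqP hs hall].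
by rewrite map_cat sumn_cat hs IH // mulSn.
Qed.

End Flat.

Lemma all_take_ T (P : pred T) s m : all P s -> all P (take m s).
Proof. by elim: s m => [|x s IH] [|m] //= /andP[-> /IH ->]. Qed.

Lemma all_flatten_ T (P : pred T) ss : all (all P) ss -> all P (flatten ss).
Proof. by elim: ss => //= s ss IH /andP[h1 /IH h2]; rewrite all_cat h1 h2. Qed.

Lemma map_eq_all T U (f g : T -> U) (eqU : U -> U -> bool) s :
  (forall x y, eqU x y -> x = y) -> all (fun x => eqU (f x) (g x)) s -> map f s = map g s.
Proof. by move=> he; elim: s => //= x s IH /andP[/he -> /IH ->]. Qed.

Section Segs.
Variables (k l : nat -> nat) (n : nat).
Hypothesis hk : forall m, 2 <= k m.
Hypothesis hl : forall m, 2 <= l m.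
Local Notation q := (q_ k l n).
Local Notation J := (jidx k l n).
Local Notation K := (k n).
Local Notation M := (l n - 1).
Local Notation L := (q_ k l n + (l n - 1)).
Local Notation P := (l n * q_ k l n).

Definition blk a j := nseq (q_ k l n - jidx k l n a) SB ++ nseq (l n - 1) (SW j)
                      ++ nseq (jidx k l n a) SE.
Definition blkb b := blk (b %/ k n) (b %% k n).
Definition szf (s : seg) := if s is SW _ then q_ k l n else 1.
Definition stf t := sumn (map szf (take t (segs k l n))).

Lemma Kpos : 0 < K. Proof. exact: leq_trans (hk n). Qed.

Lemma segs_gen c m : flatten [seq flatten [seq blk i j | j <- iota 0 K] | i <- iota m c]
   = flatten [seq blkb b | b <- iota (m * K) (c * K)].
Proof.
elim: c m => [|c IH] m; first by rewrite mul0n.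
rewrite /= mulSn iotaD map_cat flatten_cat (_ : m * K + K = m.+1 * K); last by rewrite mulSn addnC.
rewrite IH.
congr (_ ++ _); congr flatten.
rewrite -{1}(addn0 (m * K)) iotaDl -map_comp; apply/eq_in_map => j.
rewrite mem_iota add0n => /andP[_ hj] /=.
by rewrite /blkb divnMDl ?Kpos // divn_small // addn0 modnMDl modn_small.
Qed.

Lemma segsE : segs k l n = flatten [seq blkb b | b <- iota 0 (q * K)].
Proof. have := segs_gen q 0; rewrite mul0n; exact. Qed.

Lemma size_blk a j : size (blk a j) = L.
Proof. have := Jlt n hk hl a; rewrite /blk !size_cat !size_nseq; lia. Qed.

Lemma wt_blk a j : sumn (map szf (blk a j)) = P.
Proof.
have := Jlt n hk hl a; have := hl n.
rewrite /blk !map_cat !map_nseq !sumn_cat !sumn_nseq /=.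
case: (l n) => [//|M'] _; rewrite mulSn subn1 /=. lia.
Qed.

Lemma all_size : all (fun s => size s == L) [seq blkb b | b <- iota 0 (q * K)].
Proof. by rewrite all_map; apply/allP=> b _ /=; rewrite size_blk. Qed.

Lemma all_wt : all (fun s => sumn (map szf s) == P) [seq blkb b | b <- iota 0 (q * K)].
Proof. by rewrite all_map; apply/allP=> b _ /=; rewrite wt_blk. Qed.

Lemma size_segs : size (segs k l n) = q * K * L.
Proof. by rewrite segsE (size_flatten_const all_size) size_map size_iota. Qed.

Lemma nth_segs b r : b < q * K -> r < L ->
  nth SB (segs k l n) (b * L + r) = nth SB (blkb b) r.
Proof.
move=> hb hr; rewrite segsE (nth_flatten_const SB b all_size hr).
by rewrite (nth_map 0) ?size_iota // nth_iota.
Qed.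

Lemma isSW_blk a j i r : is_SW i (nth SB (blk a j) r) =
   (j == i) && (q - J a <= r < q - J a + M).
Proof.
rewrite /blk nth_cat size_nseq; case: ltnP => h1.
  by rewrite nth_nseq h1 /= andbF.
rewrite nth_cat size_nseq; case: ltnP => h2.
  by rewrite nth_nseq h2 /= (_ : r < q - J a + M) ?andbT //; lia.
have /negbTE -> : ~~ (r < q - J a + M) by lia.
rewrite nth_nseq; case: (r - (q - J a) - M < J a); case: (j == i).
all: reflexivity. Qed.

Lemma occE b r i : b < q * K -> r < L -> is_occ k l n (b * L + r) i =
   (b %% K == i) && (q - J (b %/ K) <= r < q - J (b %/ K) + M).
Proof.
move=> hb hr; rewrite /is_occ size_segs nth_segs // isSW_blk.
have h1 : b.+1 * L <= q * K * L := leq_mul hb (leqnn _).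
rewrite mulSn in h1.
by rewrite (_ : b * L + r < q * K * L) //; lia.
Qed.

Lemma off_blk a j m : m <= M -> sumn (map szf (take (q - J a + m) (blk a j))) = q - J a + m * q.
Proof.
move=> hm; rewrite /blk -(subnKC hm) nseqD -catA catA take_size_cat;
  last by rewrite size_cat !size_nseq.
by rewrite map_cat !map_nseq sumn_cat !sumn_nseq /= mul1n mulnC.
Qed.

Lemma stfE b r : b < q * K -> r <= L -> stf (b * L + r) = b * P + sumn (map szf (take r (blkb b))).
Proof.
move=> hb hr; rewrite /stf segsE take_flatten_const ?all_size ?size_map ?size_iota //.
rewrite map_cat sumn_cat (sumn_flatten_const (all_take_ _ all_wt)).
by rewrite size_takel ?size_map ?size_iota 1?ltnW // (nth_map 0) ?size_iota // nth_iota.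
Qed.

Lemma stf_occ b r i : b < q * K -> r < L -> is_occ k l n (b * L + r) i ->
  stf (b * L + r) = b * P + (q - J (b %/ K)) + (r - (q - J (b %/ K))) * q.
Proof.
move=> hb hr; rewrite occE // => /andP[_ /andP[h1 h2]].
have hm : r - (q - J (b %/ K)) <= M by lia.
have := @off_blk (b %/ K) (b %% K) _ hm; rewrite subnKC // => h.
rewrite stfE //; last exact: ltnW.
by rewrite /blkb -addnA; congr (_ + _); exact: h.
Qed.

Section WS.
Variables (S : Type) (ws : nat -> seq (letter S)).
Hypothesis hws : forall j, j < K -> size (ws j) = q.

Lemma all_szw : all (fun s => size (seg_word ws s) == szf s) (segs k l n).
Proof.
rewrite segsE; apply: all_flatten_; rewrite all_map; apply/allP=> b _ /=.
rewrite /blkb /blk !all_cat !all_nseq /= hws ?eqxx ?orbT //.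
by rewrite ltn_pmod // Kpos.
Qed.

Lemma stE t : seg_start k l n ws t = stf t.
Proof.
rewrite /seg_start /stf; congr sumn; apply: (map_eq_all (@eqP _)).
exact: all_take_ all_szw.
Qed.

Lemma enE t : seg_end k l n ws t = stf t + szf (nth SB (segs k l n) t).
Proof.
rewrite /seg_end stE; congr addn.
case: (ltnP t (size (segs k l n))) => h.
  by apply/eqP; move/(all_nthP SB): all_szw; apply.
by rewrite !nth_default.
Qed.

Lemma sizeCn : size (Cn k l n ws) = q * K * P.
Proof.
rewrite /Cn size_flatten /shape -map_comp.
rewrite (map_eq_all (g := szf) (@eqP _)); last exact: all_szw.
by rewrite segsE (sumn_flatten_const all_wt) size_map size_iota.
Qed.
End WS.

End Segs.

Section Key.
Variables (k l : nat -> nat) (n : nat).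
Hypothesis hk : forall m, 2 <= k m.
Hypothesis hl : forall m, 2 <= l m.
Local Notation q := (q_ k l n).
Local Notation J := (jidx k l n).
Local Notation K := (k n).
Local Notation M := (l n - 1).
Local Notation L := (q_ k l n + (l n - 1)).
Local Notation P := (l n * q_ k l n).
Local Notation segs := (segs k l n).
Local Notation stf := (stf k l n).
Local Notation szf := (szf k l n).

Lemma Lpos : 0 < L. Proof. have := qpos n hk hl; lia. Qed.
Lemma Kp : 0 < K. Proof. exact: leq_trans (hk n). Qed.
Lemma PE : P = M * q + q.
Proof. have := hl n; case: (l n) => [//|M'] _; by rewrite mulSn subn1 addnC. Qed.

Lemma bidx a j : j < K -> (a * K + j) %/ K = a /\ (a * K + j) %% K = j.
Proof. by move=> hj; rewrite divnMDl ?Kp // divn_small // addn0 modnMDl modn_small. Qed.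

Lemma blt a j : a < q -> j < K -> a * K + j < q * K.
Proof.
move=> ha hj; have : a.+1 * K <= q * K by rewrite leq_mul2r ha orbT.
rewrite mulSn; lia.
Qed.

Lemma occ_info a j m : a < q -> j < K -> m < M ->
  let t := (a * K + j) * L + (q - J a + m) in
  [/\ is_occ k l n t j, t < q * K * L,
      stf t = (a * K + j) * P + (q - J a) + m * q &
      szf (nth SB segs t) = q].
Proof.
move=> ha hj hm t.
have hb := blt ha hj; have [hd hmd] := bidx a hj.
have hJ := Jlt n hk hl a.
have hr : q - J a + m < L by lia.
have ho : is_occ k l n t j by rewrite /t occE // hd hmd eqxx /=; lia.
split => //.
- have : (a * K + j).+1 * L <= q * K * L by rewrite leq_mul2r hb orbT.
  rewrite mulSn /t; lia.
- by rewrite /t (stf_occ hk hl hb hr ho) hd addKn.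
- by rewrite /t nth_segs // /blkb hd hmd /blk nth_cat size_nseq ltnNge leq_addr /=
     nth_cat size_nseq (_ : _ - _ < M) /= ?nth_nseq ?ifT //; lia.
Qed.

Lemma occ_gen t i : is_occ k l n t i ->
  exists a j m, [/\ a < q, j < K, m < M, i = j & t = (a * K + j) * L + (q - J a + m)].
Proof.
move=> ho.
have ht : t < q * K * L by move: ho => /andP[]; rewrite size_segs.
set b := t %/ L; set r := t %% L.
have hb : b < q * K by rewrite ltn_divLR ?Lpos.
have hr : r < L by rewrite ltn_pmod ?Lpos.
have e : t = b * L + r by rewrite /b /r -divn_eq.
move: ho; rewrite e occE // => /andP[/eqP hi /andP[h1 h2]].
exists (b %/ K), (b %% K), (r - (q - J (b %/ K))); split => //.
- by rewrite ltn_divLR ?Kp.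
- by rewrite ltn_pmod ?Kp.
- lia.
- by rewrite -divn_eq subnKC.
Qed.

End Key.

Section Key2.
Variables (k l : nat -> nat) (n : nat).
Hypothesis hk : forall m, 2 <= k m.
Hypothesis hl : forall m, 2 <= l m.
Local Notation q := (q_ k l n).
Local Notation J := (jidx k l n).
Local Notation K := (k n).
Local Notation M := (l n - 1).
Local Notation L := (q_ k l n + (l n - 1)).
Local Notation P := (l n * q_ k l n).
Local Notation segs := (segs k l n).
Local Notation stf := (stf k l n).
Local Notation szf := (szf k l n).

Definition cc a := (J 1 + J (q - 1 - a) + J a) %/ q.
Definition cond a m := (cc a <= m.+1) && (m.+2 <= cc a + M).

Lemma ccE a : a < q -> J 1 + J (q - 1 - a) + J a = cc a * q /\ cc a <= 2.
Proof.
move=> ha; have hd := sumJ1 hk hl ha.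
have e : J 1 + J (q - 1 - a) + J a = cc a * q by rewrite /cc divnK.
split => //.
have h1 := Jlt n hk hl 1; have h2 := Jlt n hk hl (q - 1 - a); have h3 := Jlt n hk hl a.
have : cc a * q < 3 * q by lia.
by rewrite ltn_pmul2r ?(qpos n hk hl).
Qed.

Lemma fin_ar A N x s q : 0 < q -> s + q <= N -> x < A + N ->
  (s + q <= A + N - 1 - x \/ A + N - 1 - x < s) -> ~~ (A + N - (s + q) <= x < A + N - s).
Proof. move=> h1 h2 h3 h4; apply/negP => /andP[h5 h6]; lia. Qed.

Lemma mulle x y : x <= y -> x * P <= y * P.
Proof. by move=> h; rewrite leq_mul2r h orbT. Qed.

Lemma Bnd a0 j0 a2 j2 m2 y : a0 < q -> j0 < K -> a2 < q -> j2 < K -> m2 < M ->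
  ((a0 * K + j0) * P <= y < (a0 * K + j0) * P + (q - J a0)) \/
  ((a0 * K + j0) * P + P - J a0 <= y < (a0 * K + j0) * P + P) ->
  ((a2 * K + j2) * P + (q - J a2) + m2 * q) + q <= y \/
  y < (a2 * K + j2) * P + (q - J a2) + m2 * q.
Proof.
move=> ha0 hj0 ha2 hj2 hm2 hy.
have hP := PE k n hl.
have hmq : m2.+1 * q <= M * q by rewrite leq_mul2r hm2 orbT.
rewrite mulSn in hmq.
have hJ0 := Jlt n hk hl a0; have hJ2 := Jlt n hk hl a2.
case: (ltngtP (a2 * K + j2) (a0 * K + j0)) => hb.
- have := mulle hb; rewrite mulSn; lia.
- have := mulle hb; rewrite mulSn; lia.
- have [e1 _] := bidx hk a2 hj2; have [e2 _] := bidx hk a0 hj0.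
  have ea : a2 = a0 by rewrite -e1 hb e2.
  subst a2; rewrite hb; lia.
Qed.


Section WW.
Variables (S : Type) (v v' : nat -> seq (letter S)).
Hypothesis hv : forall j, j < K -> size (v j) = q.
Hypothesis hv' : forall j, j < K -> size (v' j) = q.

Lemma key_al a j m : a < q -> j < K -> m < M -> cond a m ->
  lined_up k l n v v' (J 1) ((a * K + j) * L + (q - J a + m)) (K - j - 1).
Proof.
move=> ha hj hm /andP[c1 c2].
have [hs hc] := ccE ha.
set c := cc a in hs hc c1 c2.
set a' := q - 1 - a; set j' := K - 1 - j; set m0 := c + M - 2 - m.
have ha' : a' < q by rewrite /a'; have := qpos n hk hl; lia.
have hj' : j' < K by rewrite /j'; lia.
have hm0 : m0 < M by rewrite /m0; lia.
have [o1 o2 o3 o4] := occ_info hk hl ha hj hm.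
have [p1 p2 p3 p4] := occ_info hk hl ha' hj' hm0.
apply/hasP; exists ((a' * K + j') * L + (q - J a' + m0)).
  by rewrite mem_iota add0n size_segs.
rewrite (_ : K - j - 1 = j'); last by rewrite /j'; lia.
rewrite p1 /= /rplaced_start /rplaced_end (sizeCn hk hl hv') (enE hk hv') (stE hk hv')
  (enE hk hv) (stE hk hv) o3 o4 p3 p4.
have hP := PE k n hl.
have eb : (a * K + j) + (a' * K + j') + 1 = q * K.
  have : a.+1 * K + a' * K = q * K by rewrite -mulnDl /a'; congr (_ * _); lia.
  rewrite mulSn /j'; lia.
have eN : q * K * P = (a * K + j) * P + (a' * K + j') * P + P.
  by rewrite -eb !mulnDl mul1n.
have em : m0 * q + m * q + 2 * q = c * q + M * q.
  by rewrite -!mulnDl; congr (_ * _); rewrite /m0; lia.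
have hJ1 := Jlt n hk hl 1; have hJa := Jlt n hk hl a; have hJa' := Jlt n hk hl a'.
move: hs; rewrite -/a' => hs.
rewrite eN; apply/andP; split; apply/eqP; lia.
Qed.


Lemma key_bd a j m : a < q -> j < K -> m < M -> ~~ cond a m ->
  forall x, seg_start k l n v ((a * K + j) * L + (q - J a + m)) <= x <
            seg_end k l n v ((a * K + j) * L + (q - J a + m)) ->
  rboundary k l n v' (J 1) x.
Proof.
move=> ha hj hm hnc x.
have [hs hc] := ccE ha.
move: hnc; rewrite /cond; set c := cc a in hs hc *.
rewrite negb_and -!ltnNge => hnc.
set a' := q - 1 - a; set j' := K - 1 - j.
move: hs; rewrite -/a' => hs.
have hq := qpos n hk hl.
have ha' : a' < q by rewrite /a'; lia.
have hj' : j' < K by rewrite /j'; lia.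
have [o1 o2 o3 o4] := occ_info hk hl ha hj hm.
rewrite (enE hk hv) (stE hk hv) o3 o4 => hx.
have hP := PE k n hl.
have eb : (a * K + j) + (a' * K + j') + 1 = q * K.
  have : a.+1 * K + a' * K = q * K by rewrite -mulnDl /a'; congr (_ * _); lia.
  rewrite mulSn /j'; lia.
have eN : q * K * P = (a * K + j) * P + (a' * K + j') * P + P.
  by rewrite -eb !mulnDl mul1n.
have hJ1 := Jlt n hk hl 1; have hJa := Jlt n hk hl a; have hJa' := Jlt n hk hl a'.
have hmq : m.+1 * q <= M * q by rewrite leq_mul2r hm orbT.
rewrite mulSn in hmq.
set N := q * K * P in eN *.
set y := J 1 + N - 1 - x.
have [hxl [hxu [a0 [j0 [ha0 [hj0 hr]]]]]] : J 1 <= x /\ x < J 1 + N /\ exists a0 j0, a0 < q /\ j0 < K /\ (((a0 * K + j0) * P <= y < (a0 * K + j0) * P + (q - J a0)) \/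
    ((a0 * K + j0) * P + P - J a0 <= y < (a0 * K + j0) * P + P)).
  case/orP: hnc => hnc.
  -
    have ec : c = 2 by lia.
    have em : m = 0 by lia.
    subst m; rewrite mul0n addn0 in hx.
    have hb : 0 < a * K + j.
      case: (posnP (a * K + j)) => // h0.
      have a0 : a = 0 by move/eqP: h0; rewrite addn_eq0 muln_eq0 => /andP[/orP[/eqP //|/eqP hK] _]; have := hk n; lia.
      subst a; move: hs; rewrite (J0 n hk hl) ec; have := Jlt n hk hl a'; lia.
    have hbP := mulle hb; rewrite mul1n in hbP.
    split; first lia. split; first lia.
    case: (ltnP y ((a' * K + j') * P + P)) => hy.
      exists a', j'; split => //; split => //; right; rewrite /y; lia.
    case: (posnP j) => hj0.
    + subst j.
      have a1 : 0 < a by move: hb; rewrite addn0 muln_gt0 => /andP[].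
      exists (a' + 1), 0; split; first by rewrite /a'; lia.
      split; first by have := hk n; lia.
      have e2 : (a' + 1) * K + 0 = a' * K + j' + 1 by rewrite addn0 mulnDl mul1n /j'; lia.
      have e3 : J (a' + 1) + J a = q.
        rewrite (_ : a' + 1 = q - a); last by rewrite /a'; lia.
        by apply: (sumJ2 hk hl); rewrite a1.
      left; rewrite e2 mulnDl mul1n; rewrite /y; lia.
    + exists a', (j' + 1); split => //; split; first by rewrite /j'; lia.
      have e2 : a' * K + (j' + 1) = a' * K + j' + 1 by rewrite addnA.
      left; rewrite e2 mulnDl mul1n /y; lia.
  -
    have ec : c = 0 by lia.
    have em : m.+1 = M by lia.
    have emq : m * q + q = M * q by rewrite -em mulSn addnC.
    split; first lia. split; first lia.
    exists a', j'; split => //; split => //; left; rewrite /y; lia.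
apply/andP; split; first by rewrite (sizeCn hk hl hv') -/N; apply/andP; split.
apply/allP => t' _; apply/implyP => /existsP [j2 ho].
have [a2 [j3 [m2 [ha2 hj3 hm2 ej et]]]] := occ_gen hk hl ho.
rewrite et /rplaced_start /rplaced_end (sizeCn hk hl hv') -/N (enE hk hv') (stE hk hv').
have [_ _ q3 q4] := occ_info hk hl ha2 hj3 hm2.
rewrite q3 q4.
have hB := Bnd ha0 hj0 ha2 hj3 hm2 hr.
have hst : (a2 * K + j3) * P + (q - J a2) + m2 * q + q <= N.
  have hb2 := mulle (blt ha2 hj3); rewrite mulSn in hb2.
  have hm2q : m2.+1 * q <= M * q by rewrite leq_mul2r hm2 orbT.
  rewrite mulSn in hm2q.
  have hJ2 := Jlt n hk hl a2.
  rewrite /N; clear -hb2 hm2q hJ2 hP; lia.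
exact: fin_ar hq hst hxu hB.
Qed.

End WW.
End Key2.

Lemma count_blocks (h : pred nat) m c L0 :
  count h (iota m (c * L0)) = \sum_(b < c) count h (iota (m + b * L0) L0).
Proof.
elim: c => [|c IH]; first by rewrite mul0n big_ord0.
by rewrite mulSnr iotaD count_cat IH big_ord_recr.
Qed.

Section Fin.
Variables (k l : nat -> nat) (n : nat).
Hypothesis hk : forall m, 2 <= k m.
Hypothesis hl : forall m, 2 <= l m.
Local Notation q := (q_ k l n).
Local Notation J := (jidx k l n).
Local Notation K := (k n).
Local Notation M := (l n - 1).
Local Notation L := (q_ k l n + (l n - 1)).
Local Notation P := (l n * q_ k l n).
Variables (S : Type) (v v' : nat -> seq (letter S)).
Hypothesis hv : forall j, j < K -> size (v j) = q.
Hypothesis hv' : forall j, j < K -> size (v' j) = q.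

Lemma lined_iff a j m : a < q -> j < K -> m < M ->
  lined_up k l n v v' (J 1) ((a * K + j) * L + (q - J a + m)) (K - j - 1) = cond k l n a m.
Proof.
move=> ha hj hm.
case: (boolP (cond k l n a m)) => hc; first exact: key_al.
apply/negbTE/negP => /hasP [t' ht' /andP[/andP[ho /eqP e1] /eqP e2]].
set t := (a * K + j) * L + (q - J a + m) in e1 e2.
have [o1 o2 o3 o4] := occ_info hk hl ha hj hm.
have hq := qpos n hk hl.
have hx : seg_start k l n v t <= seg_start k l n v t < seg_end k l n v t.
  by rewrite leqnn /= (enE hk hv) (stE hk hv) o4; lia.
have := key_bd hk hl hv hv' ha hj hm hc hx.
case/andP => _ /allP /(_ t' ht').
have hj2 : K - j - 1 < K by lia.
have -> : [exists j' : 'I_K, is_occ k l n t' j'] by apply/existsP; exists (Ordinal hj2).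
by rewrite /= -e1 -e2 hx.
Qed.

Lemma block_count i a j : i < K -> a < q -> j < K ->
  count (fun t => is_occ k l n t i && lined_up k l n v v' (J 1) t (K - i - 1))
        (iota ((a * K + j) * L) L) =
  if j == i then count (cond k l n a) (iota 0 M) else 0.
Proof.
move=> hi ha hj.
have hb := blt ha hj; have [hd hmd] := bidx hk a hj.
rewrite -{1}(addn0 ((a * K + j) * L)) iotaDl count_map.
have hJ := Jlt n hk hl a.
case: eqP => [ej|hne]; last first.
  rewrite (eq_in_count (a2 := pred0)) ?count_pred0 // => r.
  rewrite mem_iota add0n => /andP[_ hr] /=.
  by rewrite occE // hmd; case: eqP.
subst j.
have e : L = (q - J a) + (M + J a) by lia.
have -> : iota 0 L = iota 0 ((q - J a) + (M + J a)) by rewrite -e.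
rewrite iotaD iotaD !count_cat.
rewrite (eq_in_count (a1 := fun _ => _) (a2 := pred0)); last first.
  move=> r; rewrite mem_iota add0n => /andP[_ hr] /=.
  rewrite occE //; last by lia.
  by rewrite hd (_ : q - J a <= r = false) ?andbF //; lia.
rewrite count_pred0 add0n.
rewrite [X in _ + X = _](eq_in_count (a2 := pred0)); last first.
  move=> r; rewrite mem_iota => /andP[h1 h2] /=.
  have hr : r < L by lia.
  rewrite occE //.
  by rewrite hd (_ : r < q - J a + M = false) ?andbF //; lia.
rewrite count_pred0 addn0 add0n.
rewrite -{1}(addn0 (q - J a)) iotaDl count_map.
apply: eq_in_count => m; rewrite mem_iota add0n => /andP[_ hm] /=.
have [o1 _ _ _] := occ_info hk hl ha hj hm.
by rewrite o1 /= lined_iff.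
Qed.

End Fin.
Unset Implicit Arguments. Set Strict Implicit.

Theorem mainTheorem8 (S : Type) (k l : nat -> nat)
  (hk : forall m, 2 <= k m) (hl : forall m, 2 <= l m)
  (W : nat -> seq (letter S) -> Prop)
  (hW : forall m u, W m u -> size u = q_ k l m)
  (hWS : forall m u, W m.+1 u <->
           exists ws, (forall j, j < k m -> W m (ws j)) /\ u = Cn k l m ws)
  (n : nat) (v v' : nat -> seq (letter S))
  (hv : forall j, j < k n -> W n (v j))
  (hv' : forall j, j < k n -> W n (v' j)) :
  let j1 := jidx k l n 1 in
  (forall t i, is_occ k l n t i ->
     lined_up k l n v v' j1 t (k n - i - 1)
     \/ (forall x, seg_start k l n v t <= x < seg_end k l n v t ->
                   rboundary k l n v' j1 x))
  /\ exists C, forall i, i < k n ->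
       count (fun t => is_occ k l n t i && lined_up k l n v v' j1 t (k n - i - 1))
             (iota 0 (size (segs k l n))) = C.
Proof.
move=> j1.
have hvs : forall j, j < k n -> size (v j) = q_ k l n by move=> j hj; exact: hW (hv j hj).
have hvs' : forall j, j < k n -> size (v' j) = q_ k l n by move=> j hj; exact: hW (hv' j hj).
split.
  move=> t i ho.
  have [a [j [m [ha hj hm -> ->]]]] := occ_gen hk hl ho.
  case: (boolP (cond k l n a m)) => hc.
    by left; exact: key_al.
  by right; exact: key_bd.
exists (\sum_(a < q_ k l n) count (cond k l n a) (iota 0 (l n - 1))) => i hi.
rewrite (size_segs n hk hl) -mulnA count_blocks.
apply: eq_bigr => a _; rewrite add0n count_blocks.
rewrite (bigD1 (Ordinal hi)) //= big1 ?addn0.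
  have -> : a * (k n * (q_ k l n + (l n - 1))) + i * (q_ k l n + (l n - 1)) =
            (a * k n + i) * (q_ k l n + (l n - 1)) by rewrite mulnDl mulnA.
  by rewrite (block_count hk hl hvs hvs') // eqxx.
move=> j hj.
have -> : a * (k n * (q_ k l n + (l n - 1))) + j * (q_ k l n + (l n - 1)) =
          (a * k n + j) * (q_ k l n + (l n - 1)) by rewrite mulnDl mulnA.
rewrite (block_count hk hl hvs hvs') //.
by rewrite ifF //; apply/negbTE; move: hj; apply: contra => /eqP e; apply/eqP/val_inj.
Qed.
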